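(* Let $A$ be a closed densely defined operator in $\mathcal H$ and $G$ a bounded metric operator on $\mathcal H$ (with $G^{-1}$ possibly unbounded). Consider the conditions: (i) $GD(A)=D(A^* )$ and $A^*G\xi=GA\xi$ for every $\xi\in D(A)$ (in particular $A\dashv A^*$ with intertwining operator $G$); (ii) $G^{1/2}AG^{-1/2}$, with domain $G^{1/2}D(A)$, is self-adjoint in $\mathcal H$; (iii) $A$ is self-adjoint in $\mathcal H(G)$ (so $A$ is quasi-self-adjoint); (iv) $GD(A)=D(G^{-1}A^* )$ and $A^*G\xi=GA\xi$ for every $\xi\in D(A)$. Then (i) $\Rightarrow$ (ii) $\Rightarrow$ (iii) $\Rightarrow$ (iv). If moreover the range of $A^*$ is contained in $D(G^{-1})$, then (i)–(iv) are equivalent.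
   Context: A metric operator on a Hilbert space $\mathcal H$ is a self-adjoint operator $G$ with $\langle G\xi,\xi\rangle>0$ for all nonzero $\xi\in D(G)$. For bounded $G$, $\mathcal H(G)$ is the completion of $\mathcal H$ in the norm $\|\xi\|_G=\|G^{1/2}\xi\|$ with inner product $\langle\xi,\eta\rangle_G=\langle G\xi,\eta\rangle$; ''$A$ self-adjoint in $\mathcal H(G)$'' means $A$, with domain $D(A)$, equals its adjoint $A^\#$ computed in $\mathcal H(G)$. A closed densely defined $A$ is called quasi-self-adjoint if there is a bounded metric operator $G$ such that $A$ is self-adjoint in $\mathcal H(G)$. $D(G^{-1}A^* )=\{\zeta\in D(A^* ): A^*\zeta\in D(G^{-1})\}$. $A\dashv B$ means there is an injective closed densely defined operator $T$ with densely defined inverse such that $D(A)\subset D(T)$, $AD(A)\subset D(T)$, $TD(A)\subset D(B)$ and $BT\xi=TA\xi$ for $\xi\in D(A)$. *)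

(* Defs.v *)
From Stdlib Require Import Reals.
Open Scope R_scope.

Record Cx := mkCx { Cre : R; Cim : R }.
Definition C0 : Cx := mkCx 0 0.
Definition C1 : Cx := mkCx 1 0.
Definition Cadd (a b : Cx) : Cx := mkCx (Cre a + Cre b) (Cim a + Cim b).
Definition Copp (a : Cx) : Cx := mkCx (- Cre a) (- Cim a).
Definition Csub (a b : Cx) : Cx := Cadd a (Copp b).
Definition Cmul (a b : Cx) : Cx :=
  mkCx (Cre a * Cre b - Cim a * Cim b) (Cre a * Cim b + Cim a * Cre b).
Definition Cconj (a : Cx) : Cx := mkCx (Cre a) (- Cim a).
Definition Cabs (a : Cx) : R := sqrt (Cre a * Cre a + Cim a * Cim a).

(* inner product linear in the first argument, conjugate-linear in the second *)
Record HilbertSpace := {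
  hcar :> Type;
  hzero : hcar;
  hadd : hcar -> hcar -> hcar;
  hopp : hcar -> hcar;
  hscal : Cx -> hcar -> hcar;
  hinner : hcar -> hcar -> Cx;
  hadd_assoc : forall x y z, hadd x (hadd y z) = hadd (hadd x y) z;
  hadd_comm : forall x y, hadd x y = hadd y x;
  hadd_zero : forall x, hadd x hzero = x;
  hadd_opp : forall x, hadd x (hopp x) = hzero;
  hscal_one : forall x, hscal C1 x = x;
  hscal_assoc : forall a b x, hscal a (hscal b x) = hscal (Cmul a b) x;
  hscal_distr_v : forall a x y, hscal a (hadd x y) = hadd (hscal a x) (hscal a y);
  hscal_distr_s : forall a b x, hscal (Cadd a b) x = hadd (hscal a x) (hscal b x);
  hinner_add_l : forall x y z, hinner (hadd x y) z = Cadd (hinner x z) (hinner y z);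
  hinner_scal_l : forall a x y, hinner (hscal a x) y = Cmul a (hinner x y);
  hinner_conj : forall x y, hinner y x = Cconj (hinner x y);
  hinner_pos : forall x, 0 <= Cre (hinner x x);
  hinner_def : forall x, hinner x x = C0 -> x = hzero;
  hcomplete : forall u : nat -> hcar,
    (forall eps, 0 < eps -> exists N, forall n m, (N <= n)%nat -> (N <= m)%nat ->
        sqrt (Cre (hinner (hadd (u n) (hopp (u m))) (hadd (u n) (hopp (u m))))) < eps) ->
    exists x, forall eps, 0 < eps -> exists N, forall n, (N <= n)%nat ->
        sqrt (Cre (hinner (hadd (u n) (hopp x)) (hadd (u n) (hopp x)))) < eps
}.

Arguments hzero {_}.
Arguments hadd {_} _ _.
Arguments hopp {_} _.
Arguments hscal {_} _ _.
Arguments hinner {_} _ _.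

Section HS.
Context {H : HilbertSpace}.

Definition hsub (x y : H) : H := hadd x (hopp y).
Definition hnorm (x : H) : R := sqrt (Cre (hinner x x)).

Definition conv (u : nat -> H) (x : H) : Prop :=
  forall eps, 0 < eps -> exists N, forall n, (N <= n)%nat -> hnorm (hsub (u n) x) < eps.

Definition Cconv0 (a : nat -> Cx) : Prop :=
  forall eps, 0 < eps -> exists N, forall n, (N <= n)%nat -> Cabs (a n) < eps.

Definition graph := H -> H -> Prop.

Definition is_linear_op (A : graph) : Prop :=
  A hzero hzero /\
  (forall x y x' y', A x y -> A x' y' -> A (hadd x x') (hadd y y')) /\
  (forall c x y, A x y -> A (hscal c x) (hscal c y)) /\
  (forall x y y', A x y -> A x y' -> y = y').

Definition densely_defined (A : graph) : Prop :=
  forall x eps, 0 < eps -> exists z y, A z y /\ hnorm (hsub x z) < eps.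

Definition closed_op (A : graph) : Prop :=
  forall (u v : nat -> H) x y,
    (forall n, A (u n) (v n)) -> conv u x -> conv v y -> A x y.

Definition adjoint (A : graph) : graph :=
  fun z w => forall x y, A x y -> hinner y z = hinner x w.

Definition self_adjoint (A : graph) : Prop :=
  forall z w, A z w <-> adjoint A z w.

Definition bounded_linear (T : H -> H) : Prop :=
  (forall x y, T (hadd x y) = hadd (T x) (T y)) /\
  (forall c x, T (hscal c x) = hscal c (T x)) /\
  (exists M, forall x, hnorm (T x) <= M * hnorm x).

Definition bounded_selfadjoint (T : H -> H) : Prop :=
  bounded_linear T /\ (forall x y, hinner (T x) y = hinner x (T y)).

Definition bounded_metric (G : H -> H) : Prop :=
  bounded_selfadjoint G /\
  (forall x, x <> hzero -> Cim (hinner (G x) x) = 0 /\ 0 < Cre (hinner (G x) x)).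

Definition pos_sqrt (G S : H -> H) : Prop :=
  bounded_selfadjoint S /\
  (forall x, Cim (hinner (S x) x) = 0 /\ 0 <= Cre (hinner (S x) x)) /\
  (forall x, S (S x) = G x).

Definition innerG (G : H -> H) (x y : H) : Cx := hinner (G x) y.
Definition gnorm (G : H -> H) (x : H) : R := sqrt (Cre (innerG G x x)).

Definition Gcauchy (G : H -> H) (u : nat -> H) : Prop :=
  forall eps, 0 < eps -> exists N, forall n m, (N <= n)%nat -> (N <= m)%nat ->
    gnorm G (hsub (u n) (u m)) < eps.

Definition Gconv (G : H -> H) (u : nat -> H) (x : H) : Prop :=
  forall eps, 0 < eps -> exists N, forall n, (N <= n)%nat -> gnorm G (hsub (u n) x) < eps.

(* For G-Cauchy sequences u, v (representing elements [u], [v] of H(G)):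
   ([u],[v]) lies in the graph of the adjoint A^# of A computed in H(G), i.e.
   <A x, [u]>_G = <x, [v]>_G for all x in D(A). *)
Definition Gadjoint_seq (A : graph) (G : H -> H) (u v : nat -> H) : Prop :=
  forall x y, A x y -> Cconv0 (fun n => Csub (innerG G y (u n)) (innerG G x (v n))).

Definition self_adjoint_in_HG (A : graph) (G : H -> H) : Prop :=
  (forall x y, A x y -> Gadjoint_seq A G (fun _ => x) (fun _ => y)) /\
  (forall u v, Gcauchy G u -> Gcauchy G v -> Gadjoint_seq A G u v ->
     exists x y, A x y /\ Gconv G u x /\ Gconv G v y).

Definition cond_i (A : graph) (G : H -> H) : Prop :=
  (forall z, (exists x y, A x y /\ z = G x) <-> (exists w, adjoint A z w)) /\
  (forall x y, A x y -> adjoint A (G x) (G y)).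

Definition cond_ii (A : graph) (S : H -> H) : Prop :=
  self_adjoint (fun z w => exists x y, A x y /\ z = S x /\ w = S y).

Definition cond_iii (A : graph) (G : H -> H) : Prop := self_adjoint_in_HG A G.

(* (iv) G D(A) = D(G^{-1} A^* ) and A^* G x = G A x for x in D(A);
   D(G^{-1}) = range of G *)
Definition cond_iv (A : graph) (G : H -> H) : Prop :=
  (forall z, (exists x y, A x y /\ z = G x) <->
             (exists w, adjoint A z w /\ exists t, w = G t)) /\
  (forall x y, A x y -> adjoint A (G x) (G y)).

(* range of A^* contained in D(G^{-1}) = range of G *)
Definition range_adj_in_dom_Ginv (A : graph) (G : H -> H) : Prop :=
  forall z w, adjoint A z w -> exists t, w = G t.

End HS.

(* Main.v *)
Require Import Defs.
From Stdlib Require Import Reals Lra Lia.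
From Stdlib Require Import IndefiniteDescription Classical.
Require Import Defs.
Open Scope R_scope.

Lemma Cx_eq (a b : Cx) : Cre a = Cre b -> Cim a = Cim b -> a = b.
Proof. destruct a, b; simpl; intros; subst; reflexivity. Qed.

Ltac cx := apply Cx_eq; unfold Csub, Cadd, Copp, Cmul, Cconj, C0, C1; simpl;
  first [ring | field | lra].

Lemma fchoice {A B : Type} (P : A -> B -> Prop) :
  (forall a, exists b, P a b) -> exists f, forall a, P a (f a).
Proof.
  intro Hx. exists (fun a => proj1_sig (constructive_indefinite_description _ (Hx a))).
  intro a. exact (proj2_sig (constructive_indefinite_description _ (Hx a))).
Qed.

Section Alg.
Context {H : HilbertSpace}.
Implicit Types x y z : H.

Lemma add0l x : hadd hzero x = x.
Proof. rewrite hadd_comm; apply hadd_zero. Qed.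

Lemma add_cancel_zero x y : hadd x y = x -> y = hzero.
Proof.
  intro E.
  transitivity (hadd y (hadd x (hopp x))); [rewrite hadd_opp, hadd_zero; auto|].
  rewrite hadd_assoc, (hadd_comm _ y x), E. apply hadd_opp.
Qed.

Lemma scal0 x : hscal C0 x = hzero.
Proof.
  apply (add_cancel_zero (hscal C0 x)).
  rewrite <- hscal_distr_s. f_equal. cx.
Qed.

Lemma opp_unique x y : hadd x y = hzero -> y = hopp x.
Proof.
  intro E.
  transitivity (hadd y (hadd x (hopp x))); [rewrite hadd_opp, hadd_zero; auto|].
  rewrite hadd_assoc, (hadd_comm _ y x), E. apply add0l.
Qed.

Lemma oppE x : hopp x = hscal (mkCx (-1) 0) x.
Proof.
  symmetry; apply opp_unique.
  transitivity (hadd (hscal C1 x) (hscal (mkCx (-1) 0) x)); [rewrite hscal_one; auto|].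
  rewrite <- hscal_distr_s. replace (Cadd C1 (mkCx (-1) 0)) with C0 by cx. apply scal0.
Qed.

Lemma ip_addl x y z : hinner (hadd x y) z = Cadd (hinner x z) (hinner y z).
Proof. apply hinner_add_l. Qed.
Lemma ip_scall c x z : hinner (hscal c x) z = Cmul c (hinner x z).
Proof. apply hinner_scal_l. Qed.
Lemma ip_oppl x z : hinner (hopp x) z = Copp (hinner x z).
Proof. rewrite oppE, ip_scall. cx. Qed.
Lemma ip_subl x y z : hinner (hsub x y) z = Csub (hinner x z) (hinner y z).
Proof. unfold hsub. rewrite ip_addl, ip_oppl. reflexivity. Qed.
Lemma ip_zerol z : hinner hzero z = C0.
Proof. rewrite <- (scal0 z), ip_scall. cx. Qed.

Lemma sub_zero x y : hsub x y = hzero -> x = y.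
Proof.
  unfold hsub; intro E.
  transitivity (hadd (hadd x (hopp y)) y).
  - rewrite <- hadd_assoc, (hadd_comm _ (hopp y) y), hadd_opp, hadd_zero; auto.
  - rewrite E. apply add0l.
Qed.

Lemma ext x y : (forall z, hinner x z = hinner y z) -> x = y.
Proof.
  intro E. apply sub_zero. apply hinner_def.
  rewrite ip_subl, E. cx.
Qed.

Lemma ip_conj x y : hinner x y = Cconj (hinner y x).
Proof. apply hinner_conj. Qed.

Lemma ip_addr x y z : hinner x (hadd y z) = Cadd (hinner x y) (hinner x z).
Proof. rewrite (ip_conj x (hadd y z)), ip_addl, (ip_conj x y), (ip_conj x z). cx. Qed.
Lemma ip_scalr c x z : hinner x (hscal c z) = Cmul (Cconj c) (hinner x z).
Proof. rewrite (ip_conj x), ip_scall, (ip_conj x z). cx. Qed.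
Lemma ip_oppr x z : hinner x (hopp z) = Copp (hinner x z).
Proof. rewrite (ip_conj x), ip_oppl, (ip_conj x z). cx. Qed.
Lemma ip_subr x y z : hinner x (hsub y z) = Csub (hinner x y) (hinner x z).
Proof. unfold hsub. rewrite ip_addr, ip_oppr. reflexivity. Qed.
Lemma ip_zeror z : hinner z hzero = C0.
Proof. rewrite ip_conj, ip_zerol. cx. Qed.

End Alg.

Ltac ipsimpl := repeat rewrite ?ip_addl, ?ip_scall, ?ip_oppl, ?ip_subl, ?ip_zerol.
Ltac vec := apply ext; intro; ipsimpl; cx.


Section Norm.
Context {H : HilbertSpace}.
Implicit Types x y z : H.

Definition N x := Cre (hinner x x).

Lemma N_pos x : 0 <= N x.
Proof. apply hinner_pos. Qed.

Lemma im_self x : Cim (hinner x x) = 0.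
Proof. pose proof (ip_conj x x) as E. destruct (hinner x x) as [a b]; unfold Cconj in E; simpl in *.
  injection E; lra. Qed.

Lemma N_zero x : N x = 0 -> x = hzero.
Proof. intro E. apply hinner_def. apply Cx_eq; [exact E| apply im_self]. Qed.

Lemma re_sym x y : Cre (hinner y x) = Cre (hinner x y).
Proof. rewrite (ip_conj y x). reflexivity. Qed.
Lemma im_sym x y : Cim (hinner y x) = - Cim (hinner x y).
Proof. rewrite (ip_conj y x). reflexivity. Qed.

Lemma N_add x y : N (hadd x y) = N x + N y + 2 * Cre (hinner x y).
Proof. unfold N. rewrite ip_addl, !ip_addr.
  unfold Cadd; simpl. rewrite (re_sym y x). ring. Qed.

Lemma N_sub x y : N (hsub x y) = N x + N y - 2 * Cre (hinner x y).
Proof. unfold N. rewrite ip_subl, !ip_subr.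
  unfold Csub, Cadd, Copp; simpl. rewrite (re_sym y x). ring. Qed.

Lemma N_scal c x : N (hscal c x) = (Cre c * Cre c + Cim c * Cim c) * N x.
Proof. unfold N. rewrite ip_scall, ip_scalr. destruct c as [a b]. unfold Cmul, Cconj; simpl.
  rewrite im_self. ring. Qed.

Lemma re_scall c x y : Cre (hinner (hscal c x) y) = Cre c * Cre (hinner x y) - Cim c * Cim (hinner x y).
Proof. rewrite ip_scall. reflexivity. Qed.
Lemma re_scalr c x y : Cre (hinner x (hscal c y)) = Cre c * Cre (hinner x y) + Cim c * Cim (hinner x y).
Proof. rewrite ip_scalr. destruct c; unfold Cmul, Cconj; simpl; ring. Qed.

Lemma hnormE x : hnorm x * hnorm x = N x.
Proof. unfold hnorm. apply sqrt_sqrt, N_pos. Qed.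
Lemma hnorm_pos x : 0 <= hnorm x.
Proof. apply sqrt_pos. Qed.

Lemma norm_zero x : hnorm x = 0 -> x = hzero.
Proof. intro E. apply N_zero. rewrite <- hnormE, E. ring. Qed.

Lemma re_le x y : Cre (hinner x y) <= hnorm x * hnorm y.
Proof.
  destruct (Req_dec (hnorm x) 0) as [Ex|Ex].
  { pose proof (norm_zero x Ex) as hx. rewrite Ex, hx, ip_zerol. simpl. lra. }
  destruct (Req_dec (hnorm y) 0) as [Ey|Ey].
  { pose proof (norm_zero y Ey) as hy. rewrite Ey, hy, ip_zeror. simpl. lra. }
  pose proof (hnorm_pos x); pose proof (hnorm_pos y).
  set (a := hnorm x) in *; set (b := hnorm y) in *.
  pose proof (N_pos (hsub (hscal (mkCx b 0) x) (hscal (mkCx a 0) y))) as P.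
  rewrite N_sub, !N_scal, re_scall, re_scalr in P. simpl in P.
  rewrite <- !hnormE in P. fold a b in P.
  assert (0 < a*b) by (apply Rmult_lt_0_compat; lra).
  nra.
Qed.

Lemma hnorm_scal c x : hnorm (hscal c x) = sqrt (Cre c * Cre c + Cim c * Cim c) * hnorm x.
Proof. unfold hnorm. fold (N (hscal c x)). rewrite N_scal, sqrt_mult; try reflexivity.
  nra. apply N_pos. Qed.

Lemma hnorm_unit c x : Cre c * Cre c + Cim c * Cim c = 1 -> hnorm (hscal c x) = hnorm x.
Proof. intro E. rewrite hnorm_scal, E, sqrt_1. ring. Qed.

Lemma abs_re x y : Rabs (Cre (hinner x y)) <= hnorm x * hnorm y.
Proof.
  apply Rabs_le. split.
  - pose proof (re_le (hscal (mkCx (-1) 0) x) y) as P.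
    rewrite re_scall, hnorm_unit in P by (simpl; ring). simpl in P. lra.
  - apply re_le.
Qed.

Lemma abs_im x y : Rabs (Cim (hinner x y)) <= hnorm x * hnorm y.
Proof.
  pose proof (abs_re (hscal (mkCx 0 (-1)) x) y) as P.
  rewrite re_scall, hnorm_unit in P by (simpl; ring). simpl in P.
  replace (0 * Cre (hinner x y) - -1 * Cim (hinner x y)) with (Cim (hinner x y)) in P by ring. exact P.
Qed.

Lemma sq_le a b : 0 <= a -> 0 <= b -> a * a <= b * b -> a <= b.
Proof. intros; nra. Qed.

Lemma tri x y : hnorm (hadd x y) <= hnorm x + hnorm y.
Proof.
  apply sq_le. apply hnorm_pos. pose proof (hnorm_pos x); pose proof (hnorm_pos y); lra.
  rewrite hnormE, N_add, <- !hnormE. pose proof (re_le x y). nra.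
Qed.

Lemma dist_tri x y z : hnorm (hsub x z) <= hnorm (hsub x y) + hnorm (hsub y z).
Proof. replace (hsub x z) with (hadd (hsub x y) (hsub y z)) by vec. apply tri. Qed.

Lemma dist_sym x y : hnorm (hsub x y) = hnorm (hsub y x).
Proof. replace (hsub y x) with (hscal (mkCx (-1) 0) (hsub x y)) by vec.
  rewrite hnorm_unit; simpl; auto; ring. Qed.

End Norm.

Lemma cv_ext (a b : nat -> R) l : (forall n, a n = b n) -> Un_cv a l -> Un_cv b l.
Proof. intros E Ha eps He. destruct (Ha eps He) as [N HN]. exists N. intros n Hn. rewrite <- E. auto. Qed.

Lemma cv_bound (a b : nat -> R) l K : 0 <= K -> (forall n, Rabs (a n - l) <= K * b n) ->
  Un_cv b 0 -> Un_cv a l.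
Proof.
  intros HK Hab Hb eps He.
  assert (He' : eps / (K + 1) > 0) by (apply Rdiv_lt_0_compat; lra).
  destruct (Hb _ He') as [N HN]. exists N. intros n Hn. specialize (HN n Hn).
  unfold Rdist in *. rewrite Rminus_0_r in HN. specialize (Hab n).
  assert (b n < eps / (K+1)) by (pose proof (Rle_abs (b n)); lra).
  assert (K * (eps / (K+1)) < eps).
  { apply (Rmult_lt_reg_r (K+1)); [lra|]. field_simplify; lra. }
  assert (K * b n <= K * (eps / (K+1))) by (apply Rmult_le_compat_l; lra).
  lra.
Qed.

Lemma lim_le (a b : nat -> R) la lb : (forall n, a n <= b n) -> Un_cv a la -> Un_cv b lb -> la <= lb.
Proof.
  intros Hab Ha Hb. destruct (Rle_dec la lb) as [|Hn]; auto. exfalso.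
  assert (e : (la - lb) / 2 > 0) by lra.
  destruct (Ha _ e) as [N1 H1]. destruct (Hb _ e) as [N2 H2].
  specialize (H1 (max N1 N2) ltac:(lia)). specialize (H2 (max N1 N2) ltac:(lia)).
  specialize (Hab (max N1 N2)). unfold Rdist in *.
  apply Rabs_def2 in H1. apply Rabs_def2 in H2. lra.
Qed.

Lemma inv_small r : r > 0 -> exists N, forall n, (N <= n)%nat -> / INR (S n) < r.
Proof.
  intro Hr. destruct (INR_unbounded (/ r)) as [N HN]. exists N. intros n Hn.
  assert (INR N <= INR n) by (apply le_INR; lia).
  rewrite S_INR.
  assert (0 < / r) by (apply Rinv_0_lt_compat; lra).
  assert (0 < INR n + 1) by lra.
  apply (Rmult_lt_reg_r (INR n + 1)); auto. rewrite Rinv_l by lra.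
  apply (Rmult_lt_reg_l (/ r)); auto. rewrite <- Rmult_assoc, Rinv_l, Rmult_1_l, Rmult_1_r by lra.
  lra.
Qed.

Lemma inv_cv : Un_cv (fun n => / INR (S n)) 0.
Proof.
  intros eps He. destruct (inv_small eps He) as [N HN]. exists N. intros n Hn.
  unfold Rdist. rewrite Rminus_0_r, Rabs_right. apply HN; lia.
  apply Rle_ge, Rlt_le, Rinv_0_lt_compat. apply lt_0_INR; lia.
Qed.

Definition Ccv (a : nat -> Cx) (l : Cx) :=
  Un_cv (fun n => Cre (a n)) (Cre l) /\ Un_cv (fun n => Cim (a n)) (Cim l).

Lemma Ccv_sub a b la lb : Ccv a la -> Ccv b lb -> Ccv (fun n => Csub (a n) (b n)) (Csub la lb).
Proof.
  intros [A1 A2] [B1 B2]. split.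
  - apply (cv_ext (fun n => Cre (a n) - Cre (b n))); [intro; reflexivity|].
    exact (CV_minus _ _ _ _ A1 B1).
  - apply (cv_ext (fun n => Cim (a n) - Cim (b n))); [intro; reflexivity|].
    exact (CV_minus _ _ _ _ A2 B2).
Qed.

Lemma Ccv_unique a l1 l2 : Ccv a l1 -> Ccv a l2 -> l1 = l2.
Proof.
  intros [A1 A2] [B1 B2]. apply Cx_eq; eapply UL_sequence; eauto.
Qed.

Lemma Cabs_re c : Rabs (Cre c) <= Cabs c.
Proof.
  unfold Cabs. rewrite <- sqrt_Rsqr_abs. apply sqrt_le_1_alt. unfold Rsqr.
  pose proof (Rle_0_sqr (Cim c)); unfold Rsqr in *; lra.
Qed.
Lemma Cabs_im c : Rabs (Cim c) <= Cabs c.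
Proof.
  unfold Cabs. rewrite <- sqrt_Rsqr_abs. apply sqrt_le_1_alt. unfold Rsqr.
  pose proof (Rle_0_sqr (Cre c)); unfold Rsqr in *; lra.
Qed.
Lemma Cabs_le c : Cabs c <= Rabs (Cre c) + Rabs (Cim c).
Proof.
  unfold Cabs. apply sq_le. apply sqrt_pos.
  pose proof (Rabs_pos (Cre c)); pose proof (Rabs_pos (Cim c)); lra.
  rewrite sqrt_sqrt by nra.
  assert (E1 : Rabs (Cre c) * Rabs (Cre c) = Cre c * Cre c) by (rewrite <- Rabs_mult; apply Rabs_right; nra).
  assert (E2 : Rabs (Cim c) * Rabs (Cim c) = Cim c * Cim c) by (rewrite <- Rabs_mult; apply Rabs_right; nra).
  pose proof (Rabs_pos (Cre c)); pose proof (Rabs_pos (Cim c)). nra.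
Qed.

Lemma Cconv0_Ccv a l : Cconv0 (fun n => Csub (a n) l) <-> Ccv a l.
Proof.
  split.
  - intro Hc. split; intros eps He; destruct (Hc eps He) as [N HN]; exists N; intros n Hn;
      specialize (HN n Hn); unfold Rdist.
    + pose proof (Cabs_re (Csub (a n) l)) as Q. unfold Csub, Cadd, Copp in Q, HN; simpl in Q, HN. unfold Rminus. lra.
    + pose proof (Cabs_im (Csub (a n) l)) as Q. unfold Csub, Cadd, Copp in Q, HN; simpl in Q, HN. unfold Rminus. lra.
  - intros [A1 A2] eps He.
    assert (e : eps / 2 > 0) by lra.
    destruct (A1 _ e) as [N1 H1]. destruct (A2 _ e) as [N2 H2]. exists (max N1 N2). intros n Hn.
    specialize (H1 n ltac:(lia)). specialize (H2 n ltac:(lia)). unfold Rdist in *.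
    pose proof (Cabs_le (Csub (a n) l)). unfold Csub, Cadd, Copp in *; simpl in *. unfold Rminus in *. lra.
Qed.

Section Conv.
Context {H : HilbertSpace}.
Implicit Types x y z : H.

Lemma conv_cv (u : nat -> H) x : conv u x <-> Un_cv (fun n => hnorm (hsub (u n) x)) 0.
Proof.
  split; intros Hc eps He; destruct (Hc eps He) as [N HN]; exists N; intros n Hn; specialize (HN n Hn);
    unfold Rdist in *; rewrite Rminus_0_r in *; pose proof (hnorm_pos (hsub (u n) x)).
  - rewrite Rabs_right; lra.
  - rewrite Rabs_right in HN; lra.
Qed.

Lemma ip_cv_l (u : nat -> H) x z : conv u x -> Ccv (fun n => hinner (u n) z) (hinner x z).
Proof.
  intro Hc. apply conv_cv in Hc. split.
  - apply (cv_bound _ (fun n => hnorm (hsub (u n) x)) _ (hnorm z) (hnorm_pos z)); auto. intro n.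
    replace (Cre (hinner (u n) z) - Cre (hinner x z)) with (Cre (hinner (hsub (u n) x) z))
      by (rewrite ip_subl; reflexivity).
    rewrite Rmult_comm. apply abs_re.
  - apply (cv_bound _ (fun n => hnorm (hsub (u n) x)) _ (hnorm z) (hnorm_pos z)); auto. intro n.
    replace (Cim (hinner (u n) z) - Cim (hinner x z)) with (Cim (hinner (hsub (u n) x) z))
      by (rewrite ip_subl; reflexivity).
    rewrite Rmult_comm. apply abs_im.
Qed.

Lemma ip_cv_r (u : nat -> H) x z : conv u x -> Ccv (fun n => hinner z (u n)) (hinner z x).
Proof.
  intro Hc. apply conv_cv in Hc. split.
  - apply (cv_bound _ (fun n => hnorm (hsub (u n) x)) _ (hnorm z) (hnorm_pos z)); auto. intro n.
    replace (Cre (hinner z (u n)) - Cre (hinner z x)) with (Cre (hinner (hsub (u n) x) z))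
      by (rewrite ip_subl, (ip_conj z (u n)), (ip_conj z x); reflexivity).
    rewrite Rmult_comm. apply abs_re.
  - apply (cv_bound _ (fun n => hnorm (hsub (u n) x)) _ (hnorm z) (hnorm_pos z)); auto. intro n.
    replace (Cim (hinner z (u n)) - Cim (hinner z x)) with (- Cim (hinner (hsub (u n) x) z))
      by (rewrite ip_subl, (ip_conj z (u n)), (ip_conj z x); simpl; ring).
    rewrite Rabs_Ropp, Rmult_comm. apply abs_im.
Qed.

Lemma conv_unique (u : nat -> H) x y : conv u x -> conv u y -> x = y.
Proof.
  intros Hx Hy. apply sub_zero, norm_zero. apply Rle_antisym; [|apply hnorm_pos].
  apply Rnot_lt_le; intro Hp.
  assert (e : hnorm (hsub x y) / 2 > 0) by lra.
  destruct (Hx _ e) as [N1 H1]. destruct (Hy _ e) as [N2 H2].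
  specialize (H1 (max N1 N2) ltac:(lia)). specialize (H2 (max N1 N2) ltac:(lia)).
  pose proof (dist_tri x (u (max N1 N2)) y) as Q. rewrite (dist_sym x (u (max N1 N2))) in Q. lra.
Qed.

Lemma conv_sub_lim (u : nat -> H) x : conv u x -> forall eps, 0 < eps -> exists N, forall n m,
  (N <= n)%nat -> (N <= m)%nat -> hnorm (hsub (u n) (u m)) < eps.
Proof.
  intros Hx eps He. assert (e : eps / 2 > 0) by lra. destruct (Hx _ e) as [N HN].
  exists N. intros n m Hn Hm. pose proof (dist_tri (u n) x (u m)) as Q.
  pose proof (HN n Hn). pose proof (HN m Hm). rewrite (dist_sym x (u m)) in Q. lra.
Qed.

End Conv.

Lemma cv_const c : Un_cv (fun _ => c) c.
Proof. intros eps He. exists O. intros. unfold Rdist. rewrite Rminus_diag, Rabs_R0. lra. Qed.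

Lemma cv_scale (a : nat -> R) l c : Un_cv a l -> Un_cv (fun n => c * a n) (c * l).
Proof.
  intro Ha. apply (cv_bound _ (fun n => Rabs (a n - l)) _ (Rabs c) (Rabs_pos c)).
  - intro n. rewrite <- Rmult_minus_distr_l, Rabs_mult. lra.
  - intros eps He. destruct (Ha eps He) as [N HN]. exists N. intros n Hn. specialize (HN n Hn).
    unfold Rdist in *. rewrite Rminus_0_r, Rabs_Rabsolu. auto.
Qed.

Section Dense.
Context {H : HilbertSpace}.

Lemma par (a b : H) : N (hadd a b) + N (hsub a b) = 2 * N a + 2 * N b.
Proof. rewrite N_add, N_sub. ring. Qed.

Lemma dense_perp (M : H -> Prop) :
  M hzero -> (forall a b, M a -> M b -> M (hadd a b)) -> (forall c a, M a -> M (hscal c a)) ->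
  (forall e, (forall m, M m -> hinner m e = C0) -> e = hzero) ->
  forall h, exists u : nat -> H, (forall n, M (u n)) /\ conv u h.
Proof.
  intros M0 Madd Mscal Hperp h.
  set (E := fun r => exists m, M m /\ r = - N (hsub h m)).
  assert (Eb : bound E).
  { exists 0. intros r [m [_ Er]]. pose proof (N_pos (hsub h m)). lra. }
  assert (Ene : exists r, E r) by (exists (- N (hsub h hzero)); exists hzero; auto).
  destruct (completeness E Eb Ene) as [L [HL1 HL2]].
  set (d := - L).
  assert (F1 : forall m, M m -> d <= N (hsub h m)).
  { intros m Hm. assert (Em : E (- N (hsub h m))) by (exists m; auto).
    specialize (HL1 _ Em). unfold d; lra. }
  assert (F2 : forall eps, eps > 0 -> exists m, M m /\ N (hsub h m) < d + eps).
  { intros eps He. destruct (classic (exists m, M m /\ N (hsub h m) < d + eps)) as [|Hn]; auto.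
    exfalso. assert (Ub : is_upper_bound E (L - eps)).
    { intros r [m [Hm Er]]. destruct (Rle_dec r (L - eps)) as [|Hr]; auto. exfalso. apply Hn.
      exists m. split; auto. unfold d; lra. }
    specialize (HL2 _ Ub). lra. }
  destruct (fchoice (fun n m => M m /\ N (hsub h m) < d + / INR (S n))) as [m Hm].
  { intro n. apply F2. apply Rinv_0_lt_compat, lt_0_INR; lia. }
  assert (Cau : forall n k, N (hsub (m n) (m k)) <= 2 * / INR (S n) + 2 * / INR (S k)).
  { intros n k. destruct (Hm n) as [Mn Nn]; destruct (Hm k) as [Mk Nk].
    set (w := hscal (mkCx (1/2) 0) (hadd (m n) (m k))).
    assert (Mw : M w) by (apply Mscal, Madd; auto).
    pose proof (F1 w Mw) as Fw.
    assert (P : N (hadd (hsub h (m k)) (hsub h (m n))) + N (hsub (hsub h (m k)) (hsub h (m n)))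
                = 2 * N (hsub h (m k)) + 2 * N (hsub h (m n))) by apply par.
    replace (hadd (hsub h (m k)) (hsub h (m n))) with (hscal (mkCx 2 0) (hsub h w)) in P
      by (unfold w; vec).
    replace (hsub (hsub h (m k)) (hsub h (m n))) with (hsub (m n) (m k)) in P by vec.
    rewrite N_scal in P. simpl in P. lra. }
  destruct (hcomplete H m) as [ms Hms].
  { intros eps He. assert (e2 : eps * eps / 4 > 0) by nra.
    destruct (inv_small _ e2) as [N0 HN0]. exists N0. intros n k Hn Hk.
    change (hnorm (hsub (m n) (m k)) < eps).
    pose proof (Cau n k) as C. pose proof (HN0 n Hn). pose proof (HN0 k Hk).
    rewrite <- hnormE in C. pose proof (hnorm_pos (hsub (m n) (m k))). nra. }
  change (conv m ms) in Hms.
  set (e := hsub h ms).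
  assert (Ce : conv (fun n => hsub h (m n)) e).
  { intros eps He. destruct (Hms eps He) as [N0 HN0]. exists N0. intros n Hn.
    replace (hsub (hsub h (m n)) e) with (hsub ms (m n)) by (unfold e; vec).
    rewrite dist_sym. apply HN0; auto. }
  assert (Key : forall m0, M m0 -> Cre (hinner e m0) <= 0).
  { intros m0 Hm0.
    assert (T : forall t, t > 0 -> 2 * Cre (hinner e m0) <= t * N m0).
    { intros t Ht.
      assert (L2 : 2 * t * Cre (hinner e m0) <= t * t * N m0 + 0).
      { apply (lim_le (fun n => 2 * t * Cre (hinner (hsub h (m n)) m0))
                      (fun n => t * t * N m0 + / INR (S n))).
        - intro n. destruct (Hm n) as [Mn Nn].
          pose proof (F1 _ (Madd _ _ Mn (Mscal (mkCx t 0) _ Hm0))) as Q.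
          replace (hsub h (hadd (m n) (hscal (mkCx t 0) m0)))
            with (hsub (hsub h (m n)) (hscal (mkCx t 0) m0)) in Q by vec.
          rewrite N_sub, N_scal, re_scalr in Q. simpl in Q. nra.
        - apply cv_scale. exact (proj1 (ip_cv_l _ _ m0 Ce)).
        - apply CV_plus. apply cv_const. apply inv_cv. }
      nra. }
    destruct (Rle_dec (Cre (hinner e m0)) 0) as [|Hp]; auto. exfalso.
    set (r := Cre (hinner e m0)) in *. pose proof (N_pos m0).
    assert (Ht : r / (N m0 + 1) > 0) by (apply Rdiv_lt_0_compat; lra).
    specialize (T _ Ht).
    assert (r / (N m0 + 1) * N m0 < 2 * r).
    { apply (Rmult_lt_reg_r (N m0 + 1)); [lra|]. field_simplify; [nra|lra]. }
    lra. }
  assert (Z : forall m0, M m0 -> hinner e m0 = C0).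
  { intros m0 Hm0. pose proof (Key m0 Hm0) as K1.
    pose proof (Key _ (Mscal (mkCx (-1) 0) _ Hm0)) as K2.
    pose proof (Key _ (Mscal (mkCx 0 1) _ Hm0)) as K3.
    pose proof (Key _ (Mscal (mkCx 0 (-1)) _ Hm0)) as K4.
    rewrite re_scalr in K2, K3, K4. simpl in K2, K3, K4. apply Cx_eq; simpl; lra. }
  assert (Ez : e = hzero).
  { apply Hperp. intros m0 Hm0. rewrite ip_conj, (Z m0 Hm0). cx. }
  exists m. split; [intro n; apply (Hm n)|].
  unfold e in Ez. apply sub_zero in Ez. rewrite Ez. exact Hms.
Qed.

End Dense.

Lemma Cconv0_ext (a b : nat -> Cx) : (forall n, a n = b n) -> Cconv0 a -> Cconv0 b.
Proof. intros E Ha eps He. destruct (Ha eps He) as [N0 HN]. exists N0. intros n Hn. rewrite <- E. auto. Qed.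

Lemma Cconv0_iff (a : nat -> Cx) : Cconv0 a <-> Ccv a C0.
Proof.
  rewrite <- Cconv0_Ccv. split; apply Cconv0_ext; intro n; cx.
Qed.

Lemma Ccv_ext (a b : nat -> Cx) l : (forall n, a n = b n) -> Ccv a l -> Ccv b l.
Proof. intros E [A1 A2]. split; eapply cv_ext; eauto; intro n; simpl; rewrite E; auto. Qed.

Lemma Ccv_const c : Ccv (fun _ => c) c.
Proof. split; apply cv_const. Qed.

Lemma Csub0 a b : Csub a b = C0 -> a = b.
Proof. intro E. destruct a, b. unfold Csub, Cadd, Copp, C0 in E. simpl in E. injection E. intros.
  apply Cx_eq; simpl; lra. Qed.

Lemma Cconv0_const c : Cconv0 (fun _ => c) -> c = C0.
Proof. intro Hc. apply Cconv0_iff in Hc. eapply Ccv_unique; [apply Ccv_const| exact Hc]. Qed.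

Lemma Cconv0_zero c : Cconv0 (fun _ => Csub c c).
Proof. apply Cconv0_iff. replace C0 with (Csub c c) by cx. apply Ccv_const. Qed.

Lemma conv_ext {H : HilbertSpace} (u v : nat -> H) x : (forall n, u n = v n) -> conv u x -> conv v x.
Proof. intros E Hu eps He. destruct (Hu eps He) as [N0 HN]. exists N0. intros n Hn. rewrite <- E. auto. Qed.

Definition iC := mkCx 0 1.

Section Main.
Context {H : HilbertSpace} (A : @graph H) (G S : H -> H).
Context (HA : is_linear_op A) (Hdd : densely_defined A) (HG : bounded_metric G) (HS : pos_sqrt G S).

Definition B : @graph H := fun z w => exists x y, A x y /\ z = S x /\ w = S y.

Lemma Sadd x y : S (hadd x y) = hadd (S x) (S y).
Proof. destruct HS as [[[L _] _] _]. apply L. Qed.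
Lemma Sscal c x : S (hscal c x) = hscal c (S x).
Proof. destruct HS as [[[_ [L _]] _] _]. apply L. Qed.
Lemma Ssym x y : hinner (S x) y = hinner x (S y).
Proof. destruct HS as [[_ L] _]. apply L. Qed.
Lemma SS x : S (S x) = G x.
Proof. destruct HS as [_ [_ L]]. apply L. Qed.
Lemma Gsym x y : hinner (G x) y = hinner x (G y).
Proof. destruct HG as [[_ L] _]. apply L. Qed.
Lemma S0 : S hzero = hzero.
Proof. rewrite <- (scal0 hzero), Sscal, !scal0. reflexivity. Qed.
Lemma Ssub x y : S (hsub x y) = hsub (S x) (S y).
Proof. unfold hsub. rewrite Sadd, !oppE, Sscal. reflexivity. Qed.
Lemma GS x y : hinner (G x) y = hinner (S x) (S y).
Proof. rewrite <- SS, Ssym. reflexivity. Qed.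

Lemma S_inj x y : S x = S y -> x = y.
Proof.
  intro E. apply sub_zero. set (d := hsub x y).
  assert (Sd : S d = hzero) by (unfold d; rewrite Ssub, E; vec).
  destruct (classic (d = hzero)) as [|Hn]; auto. exfalso.
  destruct HG as [_ Hp]. destruct (Hp d Hn) as [_ Hpos].
  rewrite <- SS, Sd, S0, ip_zerol in Hpos. simpl in Hpos. lra.
Qed.

Lemma A0 : A hzero hzero.
Proof. apply HA. Qed.
Lemma Aadd x y x' y' : A x y -> A x' y' -> A (hadd x x') (hadd y y').
Proof. apply HA. Qed.
Lemma Ascal c x y : A x y -> A (hscal c x) (hscal c y).
Proof. apply HA. Qed.
Lemma Asub x y x' y' : A x y -> A x' y' -> A (hsub x x') (hsub y y').
Proof. intros. unfold hsub. rewrite !oppE. apply Aadd; auto. apply Ascal; auto. Qed.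

Lemma adj_unique z w1 w2 : adjoint A z w1 -> adjoint A z w2 -> w1 = w2.
Proof.
  intros H1 H2. apply sub_zero. set (d := hsub w1 w2).
  assert (Orth : forall x y, A x y -> hinner x d = C0).
  { intros x y Axy. unfold d. rewrite ip_subr, <- (H1 x y Axy), <- (H2 x y Axy). cx. }
  apply norm_zero. destruct (Req_dec (hnorm d) 0) as [|Hn]; auto. exfalso.
  pose proof (hnorm_pos d) as Hp.
  destruct (Hdd d (hnorm d) ltac:(lra)) as (x & y & Axy & Hx).
  pose proof (N_sub d x) as Q. rewrite re_sym, (Orth x y Axy) in Q. simpl in Q.
  pose proof (N_pos x). rewrite <- !hnormE in Q. pose proof (hnorm_pos (hsub d x)). nra.
Qed.

Lemma adjB z w : adjoint B z w <-> adjoint A (S z) (S w).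
Proof.
  split.
  - intros Hb x y Axy. rewrite <- !Ssym. apply Hb. exists x, y; auto.
  - intros Ha a b (x & y & Axy & -> & ->). rewrite !Ssym. apply Ha; auto.
Qed.

Lemma P1 : cond_i A G -> cond_ii A S.
Proof.
  intros [Hdom Hint] z w. rewrite adjB. split.
  - intros (x & y & Axy & -> & ->). rewrite !SS. apply Hint; auto.
  - intro Had. destruct (proj2 (Hdom (S z)) (ex_intro _ (S w) Had)) as (x & y & Axy & Ez).
    rewrite <- SS in Ez. apply S_inj in Ez as Ez'.
    pose proof (Hint x y Axy) as Hi. rewrite <- !SS, <- Ez in Hi.
    pose proof (adj_unique _ _ _ Had Hi) as Ew. apply S_inj in Ew.
    exists x, y; auto.
Qed.

Lemma symB x y x' y' : cond_ii A S -> A x y -> A x' y' -> hinner (S y') (S x) = hinner (S x') (S y).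
Proof.
  intros Hii Axy Axy'. assert (Hb : B (S x) (S y)) by (exists x, y; auto).
  apply (Hii _ _) in Hb. apply Hb. exists x', y'; auto.
Qed.

Lemma P2 : cond_ii A S -> cond_iii A G.
Proof.
  intro Hii. split.
  - intros x y Axy x' y' Axy'. unfold innerG. rewrite !GS, (symB x y x' y' Hii Axy Axy').
    apply Cconv0_zero.
  - intros u v Hu Hv Hadj.
    assert (Cu : forall (w : nat -> H), Gcauchy G w -> exists p, conv (fun n => S (w n)) p).
    { intros w Hw. apply (hcomplete H (fun n => S (w n))).
      intros eps He. destruct (Hw eps He) as [N0 HN]. exists N0. intros n m Hn Hm.
      change (hnorm (hsub (S (w n)) (S (w m))) < eps). rewrite <- Ssub.
      specialize (HN n m Hn Hm). unfold gnorm, innerG in HN. rewrite GS in HN. exact HN. }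
    destruct (Cu u Hu) as [p Hp]. destruct (Cu v Hv) as [q Hq].
    assert (Hb : B p q).
    { apply Hii. intros a b (x & y & Axy & -> & ->).
      pose proof (Hadj x y Axy) as Hc. apply Cconv0_iff in Hc.
      apply Csub0. eapply Ccv_unique; [|exact Hc].
      apply (Ccv_ext (fun n => Csub (hinner (S y) (S (u n))) (hinner (S x) (S (v n))))).
      - intro n. unfold innerG. rewrite !GS. reflexivity.
      - apply Ccv_sub; apply ip_cv_r; auto. }
    destruct Hb as (x0 & y0 & Axy0 & Ep & Eq). exists x0, y0. split; auto.
    split; intros eps He; [destruct (Hp eps He) as [N0 HN]|destruct (Hq eps He) as [N0 HN]];
      exists N0; intros n Hn; specialize (HN n Hn); unfold gnorm, innerG; rewrite GS, Ssub;
      [rewrite <- Ep | rewrite <- Eq]; exact HN.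
Qed.

Lemma perpS e : (forall m, (exists x, m = S x) -> hinner m e = C0) -> e = hzero.
Proof.
  intro Hp. specialize (Hp (S (S e)) (ex_intro _ _ eq_refl)).
  rewrite Ssym in Hp. assert (Hn : N (S e) = 0) by (unfold N; rewrite Hp; reflexivity).
  apply N_zero in Hn. rewrite <- S0 in Hn. apply S_inj in Hn. exact Hn.
Qed.

Lemma denseS h : exists xs : nat -> H, conv (fun n => S (xs n)) h.
Proof.
  destruct (dense_perp (fun m => exists x, m = S x)) with (h := h) as [u [Mu Cu]].
  - exists hzero. symmetry; apply S0.
  - intros a b [x ->] [y ->]. exists (hadd x y). symmetry; apply Sadd.
  - intros c a [x ->]. exists (hscal c x). symmetry; apply Sscal.
  - apply perpS.
  - destruct (fchoice (fun n x => u n = S x) Mu) as [xs Hxs]. exists xs.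
    eapply conv_ext; [|exact Cu]. auto.
Qed.

Lemma P3a : cond_iii A G -> cond_ii A S.
Proof.
  intros [Hs Ha] z w. rewrite adjB. split.
  - intros (x & y & Axy & -> & ->). rewrite !SS. intros x' y' Axy'.
    pose proof (Cconv0_const _ (Hs x y Axy x' y' Axy')) as E. apply Csub0 in E.
    unfold innerG in E. rewrite !Gsym in E. exact E.
  - intro Had. destruct (denseS z) as [xs Hx]. destruct (denseS w) as [ys Hy].
    assert (Gc : forall (ws : nat -> H) p, conv (fun n => S (ws n)) p -> Gcauchy G ws).
    { intros ws p Hw eps He. destruct (conv_sub_lim _ _ Hw eps He) as [N0 HN]. exists N0.
      intros n m Hn Hm. unfold gnorm, innerG. rewrite GS, Ssub. apply HN; auto. }
    destruct (Ha xs ys (Gc _ _ Hx) (Gc _ _ Hy)) as (x0 & y0 & Axy0 & Gx & Gy).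
    + intros x y Axy. apply Cconv0_iff.
      replace C0 with (Csub (hinner (S y) z) (hinner (S x) w))
        by (rewrite !Ssym, (Had x y Axy); cx).
      apply (Ccv_ext (fun n => Csub (hinner (S y) (S (xs n))) (hinner (S x) (S (ys n))))).
      * intro n. unfold innerG. rewrite !GS. reflexivity.
      * apply Ccv_sub; apply ip_cv_r; auto.
    + assert (Cv : forall (ws : nat -> H) p, Gconv G ws p -> conv (fun n => S (ws n)) (S p)).
      { intros ws p Hw eps He. destruct (Hw eps He) as [N0 HN]. exists N0. intros n Hn.
        specialize (HN n Hn). unfold gnorm, innerG in HN. rewrite GS, Ssub in HN. exact HN. }
      exists x0, y0. split; auto. split.
      * eapply conv_unique; [exact Hx| apply Cv; auto].
      * eapply conv_unique; [exact Hy| apply Cv; auto].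
Qed.


Lemma ranS : cond_ii A S -> forall h, exists x, h = S x.
Proof.
  intros Hii h.
  set (M := fun m => exists x y, A x y /\ m = hadd (S y) (hscal iC (S x))).
  destruct (dense_perp M) with (h := h) as [hs [Mh Ch]].
  - exists hzero, hzero. split; [apply A0|]. rewrite S0. vec.
  - intros a b (x1 & y1 & A1 & ->) (x2 & y2 & A2 & ->). exists (hadd x1 x2), (hadd y1 y2).
    split; [apply Aadd; auto|]. rewrite !Sadd. vec.
  - intros c a (x & y & Axy & ->). exists (hscal c x), (hscal c y).
    split; [apply Ascal; auto|]. rewrite !Sscal. vec.
  - intros e He.
    assert (Hb : B e (hscal iC e)).
    { apply Hii. intros a b (x & y & Axy & -> & ->).
      pose proof (He _ (ex_intro _ x (ex_intro _ y (conj Axy eq_refl)))) as E.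
      rewrite ip_addl, ip_scall in E. rewrite ip_scalr.
      apply Cx_eq; unfold Cadd, Cmul, Cconj, iC, C0 in *; simpl in *; injection E; intros; lra. }
    destruct Hb as (x0 & y0 & Axy0 & Ex & Ey).
    pose proof (He _ (ex_intro _ x0 (ex_intro _ y0 (conj Axy0 eq_refl)))) as E.
    rewrite <- Ex, <- Ey, ip_addl, !ip_scall in E.
    apply N_zero. unfold N. apply (f_equal Cim) in E.
    unfold Cadd, Cmul, iC, C0 in E; simpl in E. lra.
  - destruct (fchoice (fun n (p : H * H) => A (fst p) (snd p) /\
                 hs n = hadd (S (snd p)) (hscal iC (S (fst p))))) as [f Hf].
    { intro n. destruct (Mh n) as (x & y & Axy & E). exists (x, y); auto. }
    set (xs := fun n => fst (f n)). set (ys := fun n => snd (f n)).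
    assert (Axs : forall n, A (xs n) (ys n)) by (intro n; apply Hf).
    assert (Ehs : forall n, hs n = hadd (S (ys n)) (hscal iC (S (xs n)))) by (intro n; apply Hf).
    assert (Sym : forall x y, A x y -> Cim (hinner (S y) (S x)) = 0).
    { intros x y Axy. pose proof (symB x y x y Hii Axy Axy) as E.
      pose proof (ip_conj (S x) (S y)) as E2. rewrite <- E in E2.
      destruct (hinner (S y) (S x)); unfold Cconj in E2; injection E2; simpl; lra. }
    assert (Nsplit : forall x y, A x y ->
      N (hadd (S y) (hscal iC (S x))) = N (S y) + N (S x)).
    { intros x y Axy. rewrite N_add, N_scal, re_scalr, (Sym x y Axy). simpl. ring. }
    assert (Dif : forall n k, hnorm (hsub (S (ys n)) (S (ys k))) <= hnorm (hsub (hs n) (hs k)) /\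
                              hnorm (hsub (S (xs n)) (S (xs k))) <= hnorm (hsub (hs n) (hs k))).
    { intros n k.
      assert (E : hsub (hs n) (hs k) = hadd (S (hsub (ys n) (ys k))) (hscal iC (S (hsub (xs n) (xs k))))).
      { rewrite !Ehs, !Ssub. vec. }
      pose proof (Nsplit _ _ (Asub _ _ _ _ (Axs n) (Axs k))) as Q. rewrite <- E, !Ssub in Q.
      pose proof (N_pos (hsub (S (ys n)) (S (ys k)))). pose proof (N_pos (hsub (S (xs n)) (S (xs k)))).
      split; apply sq_le; try apply hnorm_pos; rewrite !hnormE; lra. }
    assert (Cc : forall (w : nat -> H), (forall n k, hnorm (hsub (w n) (w k)) <= hnorm (hsub (hs n) (hs k)))
                  -> exists p, conv w p).
    { intros w Hw. apply (hcomplete H w). intros eps He.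
      destruct (conv_sub_lim _ _ Ch eps He) as [N0 HN]. exists N0. intros n m Hn Hm.
      change (hnorm (hsub (w n) (w m)) < eps). specialize (Hw n m). specialize (HN n m Hn Hm). lra. }
    destruct (Cc (fun n => S (xs n))) as [p Hp]; [intros; apply Dif|].
    destruct (Cc (fun n => S (ys n))) as [q Hq]; [intros; apply Dif|].
    assert (Hb : B p q).
    { apply Hii. intros a b (x & y & Axy & -> & ->).
      eapply Ccv_unique; [apply ip_cv_r; exact Hp|].
      apply (Ccv_ext (fun n => hinner (S x) (S (ys n)))); [|apply ip_cv_r; exact Hq].
      intro n. symmetry. apply (symB _ _ _ _ Hii (Axs n) Axy). }
    destruct Hb as (x0 & y0 & Axy0 & Ep & Eq).
    exists (hadd y0 (hscal iC x0)). rewrite Sadd, Sscal, <- Ep, <- Eq.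
    eapply conv_unique; [exact Ch|].
    apply conv_cv. apply conv_cv in Hp. apply conv_cv in Hq.
    apply (cv_bound _ (fun n => hnorm (hsub (S (ys n)) q) + hnorm (hsub (S (xs n)) p)) _ 1); [lra| |].
    + intro n. rewrite Rminus_0_r, Rabs_right by (apply Rle_ge, hnorm_pos). rewrite Rmult_1_l.
      replace (hsub (hs n) (hadd q (hscal iC p)))
        with (hadd (hsub (S (ys n)) q) (hscal iC (hsub (S (xs n)) p))) by (rewrite Ehs; vec).
      rewrite <- (hnorm_unit iC (hsub (S (xs n)) p)) by (simpl; ring). apply tri.
    + replace 0 with (0 + 0) by ring. apply CV_plus; auto.
Qed.

Lemma P3b : cond_ii A S -> cond_iv A G.
Proof.
  intro Hii.
  assert (Hint : forall x y, A x y -> adjoint A (G x) (G y)).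
  { intros x y Axy. assert (Hb : B (S x) (S y)) by (exists x, y; auto).
    apply Hii, adjB in Hb. rewrite !SS in Hb. exact Hb. }
  split; [|exact Hint]. intro z. split.
  - intros (x & y & Axy & ->). exists (G y). split; [apply Hint; auto| exists y; auto].
  - intros (w & Had & t & ->). destruct (ranS Hii z) as [q ->].
    assert (Hb : B q (S t)) by (apply Hii, adjB; rewrite SS; exact Had).
    destruct Hb as (x0 & y0 & Axy0 & -> & _). exists x0, y0. split; auto. apply SS.
Qed.

Lemma P4 : range_adj_in_dom_Ginv A G -> cond_iv A G -> cond_i A G.
Proof.
  intros Hr [Hdom Hint]. split; auto. intro z. rewrite Hdom. split.
  - intros (w & Hw & _). exists w; auto.
  - intros (w & Hw). exists w. split; auto. eapply Hr; eauto.
Qed.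

End Main.

Theorem proposition3p12 (H : HilbertSpace) (A : @graph H) (G S : H -> H) :
  is_linear_op A -> densely_defined A -> closed_op A ->
  bounded_metric G -> pos_sqrt G S ->
  (cond_i A G -> cond_ii A S) /\
  (cond_ii A S -> cond_iii A G) /\
  (cond_iii A G -> cond_iv A G) /\
  (range_adj_in_dom_Ginv A G ->
     (cond_i A G <-> cond_ii A S) /\
     (cond_ii A S <-> cond_iii A G) /\
     (cond_iii A G <-> cond_iv A G)).
Proof.
  intros HA Hdd _ HG HS.
  pose proof (P1 A G S Hdd HG HS) as Q1.
  pose proof (P2 A G S HS) as Q2.
  assert (Q3 : cond_iii A G -> cond_iv A G).
  { intro h. apply (P3b A G S HA HS). apply (P3a A G S HG HS); auto. }
  split; [exact Q1|]. split; [exact Q2|]. split; [exact Q3|].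
  intro Hr. pose proof (P4 A G Hr) as Q4.
  split; [split; [exact Q1| intro h; apply Q4, Q3, Q2, h]|].
  split; [split; [exact Q2| apply (P3a A G S HG HS)]|].
  split; [exact Q3| intro h; apply Q2, Q1, Q4, h].
Qed.
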